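(* In the proposed quantized Grassmannian feedback scheme with a sphere-packing codebook (satisfying $\max_F d_c(\hat F,F)\le \Delta(1+o(2^{-N_f/N_G}))$), choosing the number of feedback bits per receiver as $$N_f=N((K-1)M-N)\log_2 P$$ keeps the interference leakage power $L_i$ of every receiver bounded by a constant independent of $P$ as $P\to\infty$.
   Context: System model: $K$ transmitter–receiver pairs, $M$ transmit and $N$ receive antennas per node, $(K-1)M\ge N$; generic channels $H_{ij}\in\mathbb{C}^{N\times M}$; truncated unitary precoders $V_j\in\mathbb{C}^{M\times d}$; inputs $x_j$ with $\mathbb{E}[x_jx_j^H]=\frac{P}{d}I_d$; $y_i=H_{ii}V_ix_i+\sum_{j\ne i}H_{ij}V_jx_j+n_i$, $n_i\sim\mathcal{CN}(0,I_N)$. $H_i=[H_{i1},\dots,H_{i,i-1},H_{i,i+1},\dots,H_{iK}]$, $V_{-i}=\mathrm{Bdiag}(V_1,\dots,V_{i-1},V_{i+1},\dots,V_K)$. Scheme: economy QR $H_i^H=F_iC_i$ ($F_i$ truncated unitary $(K-1)M\times N$, $C_i$ invertible); codebook $\mathcal S$ of $2^{N_f}$ truncated unitary $(K-1)M\times N$ matrices; $\hat F_i=\arg\min_{S\in\mathcal S}d_c(S,F_i)$ with $d_c(X,Y)=\frac1{\sqrt2}\|XX^H-YY^H\|_F$; truncated unitary $V_j$, $\tilde U_i\in\mathbb{C}^{N\times d}$ with $\tilde U_i^H\hat F_i^HV_{-i}=0$; receive filter $G_i^H$, $G_i=C_i^{-1}F_i^H\hat F_i\tilde U_i$; leakage $e_i=\sum_{j\ne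 i}G_i^HH_{ij}V_jx_j$, $L_i=\mathrm{tr}\,\mathbb{E}[e_ie_i^H]$. $N_G=2N((K-1)M-N)$, $\Delta=2/(c\,2^{N_f})^{1/N_G}$ with $c$ a positive constant depending only on $K,M,N$. *)

(* Defs.v *)
(* complex scalars are an arbitrary numClosedFieldType C
   (e.g. algC); real quantities are the real elements of C. *)
From HB Require Import structures.
From mathcomp Require Import all_boot all_order all_algebra.
Set Implicit Arguments. Unset Strict Implicit. Unset Printing Implicit Defensive.
Import Order.TTheory GRing.Theory Num.Theory.
Local Open Scope ring_scope.

Definition mxH (C : numClosedFieldType) m n (X : 'M[C]_(m, n)) : 'M[C]_(n, m) :=
  (map_mx Num.conj X)^T.

Definition trunc_unitary (C : numClosedFieldType) m n (X : 'M[C]_(m, n)) : Prop :=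
  mxH X *m X = 1%:M.

Definition frob (C : numClosedFieldType) m n (X : 'M[C]_(m, n)) : C :=
  sqrtC (\sum_(a < m) \sum_(b < n) `|X a b| ^+ 2).

Definition dchord (C : numClosedFieldType) m n (X Y : 'M[C]_(m, n)) : C :=
  (sqrtC 2)^-1 * frob (X *m mxH X - Y *m mxH Y).

Definition NG (K M N : nat) : nat := (2 * N * (K.-1 * M - N))%N.

(* Delta = 2 / (c Q)^(1/N_G), where Q = 2^{N_f} *)
Definition Delta (C : numClosedFieldType) (K M N : nat) (c Q : C) : C :=
  2 / (NG K M N).-root (c * Q).

(* H_i = [H_{i1} .. H_{i,i-1} H_{i,i+1} .. H_{iK}]  (N x (K-1)M) *)
Definition Hcat (C : numClosedFieldType) (K M N : nat)
  (H : 'I_K -> 'I_K -> 'M[C]_(N, M)) (i : 'I_K) :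
  'M[C]_(N, \sum_(j < K.-1) M) :=
  \mxrow_(j < K.-1) H i (lift i j).

(* V_{-i} = Bdiag(V_1,..,V_{i-1},V_{i+1},..,V_K)  ((K-1)M x (K-1)d) *)
Definition Vminus (C : numClosedFieldType) (K M d : nat)
  (V : 'I_K -> 'M[C]_(M, d)) (i : 'I_K) :
  'M[C]_(\sum_(j < K.-1) M, \sum_(j < K.-1) d) :=
  \mxblock_(j < K.-1, k < K.-1) (if j == k then V (lift i j) else 0).

Definition Gfilt (C : numClosedFieldType) (p N d : nat)
  (Ci : 'M[C]_N) (F Fh : 'M[C]_(p, N)) (U : 'M[C]_(N, d)) : 'M[C]_(N, d) :=
  invmx Ci *m mxH F *m Fh *m U.

(* leakage L_i = tr E[e_i e_i^H] with independent zero-mean inputs,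
   E[x_j x_j^H] = P/d I:  L_i = sum_{j<>i} P/d tr(A_j A_j^H),
   A_j = G_i^H H_ij V_j *)
Definition leakage (C : numClosedFieldType) (K M N d : nat) (P : C)
  (H : 'I_K -> 'I_K -> 'M[C]_(N, M)) (V : 'I_K -> 'M[C]_(M, d))
  (G : 'M[C]_(N, d)) (i : 'I_K) : C :=
  \sum_(j < K | j != i)
     (P / d%:R) * \tr (mxH G *m H i j *m V j *m mxH (mxH G *m H i j *m V j)).

(* f(q) = o(q^{-1/n}) as q -> +oo (q real) *)
Definition little_o_root (C : numClosedFieldType) (f : C -> C) (n : nat) : Prop :=
  forall e : C, 0 < e -> exists X : C, 0 < X /\
    forall q : C, X <= q -> `|f q| <= e / n.-root q.

(* Main.v *)
Require Import Defs.
From HB Require Import structures.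
From mathcomp Require Import all_boot all_order all_algebra.
From mathcomp Require Import ring.
Import Order.TTheory GRing.Theory Num.Theory.
Set Implicit Arguments. Unset Strict Implicit. Unset Printing Implicit Defensive.
Local Open Scope ring_scope.

Section H.
Variable C : numClosedFieldType.

Lemma mxHK m n (X : 'M[C]_(m, n)) : mxH (mxH X) = X.
Proof. by apply/matrixP => a b; rewrite !mxE conjCK. Qed.

Lemma mxHM m n p (A : 'M[C]_(m, n)) (B : 'M[C]_(n, p)) :
  mxH (A *m B) = mxH B *m mxH A.
Proof. by rewrite /mxH map_mxM trmx_mul. Qed.

Lemma mxHB m n (A B : 'M[C]_(m, n)) : mxH (A - B) = mxH A - mxH B.
Proof. by rewrite /mxH map_mxB linearB. Qed.

Lemma mxH1 n : mxH (1%:M : 'M[C]_n) = 1%:M.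
Proof. by rewrite /mxH map_mx1 trmx1. Qed.

Definition ns m n (Z : 'M[C]_(m, n)) := \tr (Z *m mxH Z).

Lemma nsE m n (Z : 'M[C]_(m, n)) : ns Z = \sum_a \sum_b `|Z a b| ^+ 2.
Proof.
rewrite /ns /mxtrace; apply: eq_bigr => a _; rewrite mxE.
by apply: eq_bigr => b _; rewrite !mxE normCK.
Qed.

Lemma ns_ge0 m n (Z : 'M[C]_(m, n)) : 0 <= ns Z.
Proof. by rewrite nsE; apply: sumr_ge0 => a _; apply: sumr_ge0 => b _; apply: exprn_ge0. Qed.

Lemma nsH m n (Z : 'M[C]_(m, n)) : ns (mxH Z) = ns Z.
Proof. by rewrite /ns mxHK mxtrace_mulC. Qed.

Lemma frob_ns m n (Z : 'M[C]_(m, n)) : frob Z = sqrtC (ns Z).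
Proof. by rewrite nsE. Qed.

Lemma ns_left m k n (X : 'M[C]_(m, k)) (Y : 'M[C]_(m, n)) :
  mxH X *m X = 1%:M -> ns (mxH X *m Y) <= ns Y.
Proof.
move=> hX.
set P := X *m mxH X.
have e1 : ns ((1%:M - P) *m Y) = ns Y - ns (mxH X *m Y).
  rewrite /ns !mxHM mxHB mxH1 /P mxHM mxHK.
  rewrite mxtrace_mulC !mulmxA -(mulmxA (mxH Y)).
  have -> : (1%:M - X *m mxH X) *m (1%:M - X *m mxH X) = 1%:M - X *m mxH X.
    rewrite mulmxBl mulmxBr !mul1mx mulmxBr mulmx1 !mulmxA -(mulmxA X) hX mulmx1.
    by rewrite subrr subr0.
  rewrite mulmxBr mulmx1 mulmxBl linearB /=; congr (_ - _).
    by rewrite mxtrace_mulC.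
  by rewrite mulmxA -(mulmxA _ (mxH X)) mxtrace_mulC !mulmxA.
rewrite -subr_ge0 -e1; exact: ns_ge0.
Qed.

Lemma ns_right m k n (Y : 'M[C]_(m, n)) (W : 'M[C]_(n, k)) :
  mxH W *m W = 1%:M -> ns (Y *m W) <= ns Y.
Proof.
move=> hW; rewrite -nsH mxHM -(nsH Y); exact: ns_left.
Qed.
End H.
Section B.
Variable C : numClosedFieldType.

Lemma mxH_mxcol p (p_ : 'I_p -> nat) n (B : forall i, 'M[C]_(p_ i, n)) :
  mxH (\mxcol_i B i) = \mxrow_i mxH (B i).
Proof. by apply/matrixP => a b; rewrite !mxE. Qed.

Lemma sum_if1 (V : nmodType) n (j : 'I_n) (F : 'I_n -> V) :
  \sum_(k < n) (if k == j then F k else 0) = F j.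
Proof.
rewrite (bigD1 j) //= eqxx big1 ?addr0 // => k /negbTE ->; done.
Qed.

Variables (K M N d : nat) (V : 'I_K -> 'M[C]_(M, d)) (i : 'I_K).

Definition Ssel (j : 'I_K.-1) : 'M[C]_(\sum_(k < K.-1) d, d) :=
  \mxcol_(k < K.-1) (if k == j then 1%:M else 0 : 'M[C]_d).

Definition Wsel (j : 'I_K.-1) : 'M[C]_(\sum_(k < K.-1) M, d) :=
  \mxcol_(k < K.-1) (if k == j then V (lift i j) else 0 : 'M[C]_(M, d)).

Lemma VS j : Vminus V i *m Ssel j = Wsel j.
Proof.
rewrite /Vminus /Ssel mul_mxblock_mxrow /Wsel; apply: eq_mxcol => a.
rewrite (bigD1 j) //= eqxx mulmx1 big1 ?addr0.
  by case: eqP => [->|]; rewrite ?eqxx.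
by move=> k /negbTE ->; rewrite mulmx0.
Qed.

Lemma HW (H : 'I_K -> 'I_K -> 'M[C]_(N, M)) j :
  Hcat H i *m Wsel j = H i (lift i j) *m V (lift i j).
Proof.
rewrite /Hcat /Wsel mul_mxrow_mxcol (bigD1 j) //= eqxx big1 ?addr0 //.
by move=> k /negbTE ->; rewrite mulmx0.
Qed.

Lemma WW j : trunc_unitary (V (lift i j)) -> mxH (Wsel j) *m Wsel j = 1%:M.
Proof.
move=> hV; rewrite /Wsel mxH_mxcol mul_mxrow_mxcol (bigD1 j) //= eqxx hV big1 ?addr0 //.
move=> k /negbTE ->.
have -> : mxH (0 : 'M[C]_(M, d)) = 0 by apply/matrixP => a b; rewrite !mxE conjC0.
by rewrite mul0mx.
Qed.
End B.
Lemma keyA (C : numClosedFieldType) (K M N d : nat)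
  (H : 'I_K -> 'I_K -> 'M[C]_(N, M)) (V : 'I_K -> 'M[C]_(M, d)) (i : 'I_K)
  (F : 'M[C]_(\sum_(j < K.-1) M, N)) (Ci : 'M[C]_N)
  (Fh : 'M[C]_(\sum_(j < K.-1) M, N)) (U : 'M[C]_(N, d)) (j : 'I_K.-1) :
  trunc_unitary (V (lift i j)) -> Ci \in unitmx -> mxH (Hcat H i) = F *m Ci ->
  trunc_unitary Fh -> trunc_unitary U -> mxH U *m mxH Fh *m Vminus V i = 0 ->
  ns (mxH (Gfilt Ci F Fh U) *m H i (lift i j) *m V (lift i j))
    <= ns (F *m mxH F - Fh *m mxH Fh).
Proof.
move=> hV hC hH hFh hU hO.
have eH : Hcat H i = mxH Ci *m mxH F by rewrite -mxHM -hH mxHK.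
have eA : mxH (Gfilt Ci F Fh U) *m H i (lift i j) *m V (lift i j)
    = mxH (Fh *m U) *m ((F *m mxH F - Fh *m mxH Fh) *m Wsel V i j).
  rewrite -mulmxA -HW eH /Gfilt !mxHM.
  have hI : mxH (invmx Ci) *m mxH Ci = 1%:M by rewrite -mxHM mulmxV // mxH1.
  rewrite mulmxBl mulmxBr.
  have -> : mxH U *m mxH Fh *m (Fh *m mxH Fh *m Wsel V i j) = 0.
    rewrite !mulmxA -(mulmxA (mxH U)) hFh mulmx1 -VS mulmxA hO mul0mx //.
  rewrite subr0 mxHK !mulmxA; congr (_ *m _).
  by rewrite -(mulmxA _ (mxH (invmx Ci))) hI mulmx1.
rewrite eA; apply: le_trans (ns_left _ _) _.
  by rewrite mxHM !mulmxA -(mulmxA (mxH U)) hFh mulmx1.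
by apply: ns_right; apply: WW.
Qed.
Lemma scal (C : numClosedFieldType) (n d : nat) (c P dc eps : C) :
  (0 < n)%N -> (0 < d)%N -> 0 < c -> 0 < P -> 0 <= dc ->
  dc <= 2 / n.-root (c * sqrtC P ^+ n) * (1 + eps) -> eps <= 1 ->
  P / d%:R * (2 * dc ^+ 2) <= 32 / (d%:R * (n.-root c) ^+ 2).
Proof.
move=> hn hd hc hP hdc hle he.
set s := sqrtC P; set r := n.-root c.
have s0 : 0 < s by rewrite sqrtC_gt0.
have r0 : 0 < r by rewrite rootC_gt0.
have eD : n.-root (c * s ^+ n) = r * s by rewrite rootCMl ?ltW // exprCK // ltW.
rewrite eD in hle.
have D0 : 0 <= 2 / (r * s) by rewrite divr_ge0 ?ler0n // mulr_ge0 // ltW.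
have h2 : dc <= 2 / (r * s) * 2.
  apply: le_trans hle _; apply: ler_wpM2l => //.
  by rewrite -[2 in X in _ <= X]/(1 + 1) lerD2l.
have h3 : dc ^+ 2 <= (2 / (r * s) * 2) ^+ 2.
  rewrite ler_pXn2r // ?nnegrE //; apply: mulr_ge0 => //.
have P0 : 0 <= P / d%:R by rewrite divr_ge0 ?ler0n // ltW.
apply: le_trans (ler_wpM2l P0 (ler_wpM2l (ler0n _ 2) h3)) _.
have eP : P = s ^+ 2 by rewrite sqrtCK.
rewrite eP le_eqVlt; apply/orP; left; apply/eqP.
have d0 : d%:R != 0 :> C by rewrite pnatr_eq0 -lt0n.
field.
by rewrite d0 (gt_eqF r0) (gt_eqF s0).
Qed.

Lemma nsN (C : numClosedFieldType) m n (Z : 'M[C]_(m, n)) : ns (- Z) = ns Z.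
Proof. by rewrite !nsE; apply: eq_bigr => a _; apply: eq_bigr => b _; rewrite mxE normrN. Qed.

Lemma dchord_ns (C : numClosedFieldType) m n (A B : 'M[C]_(m, n)) :
  2 * dchord A B ^+ 2 = ns (B *m mxH B - A *m mxH A).
Proof.
rewrite /dchord frob_ns -opprB nsN exprMn sqrtCK exprVn sqrtCK.
by rewrite mulrA mulfV ?mul1r // pnatr_eq0.
Qed.

Lemma dchord_ge0 (C : numClosedFieldType) m n (A B : 'M[C]_(m, n)) :
  0 <= dchord A B.
Proof.
by rewrite /dchord frob_ns mulr_ge0 // ?invr_ge0 sqrtC_ge0 ?ler0n ?ns_ge0.
Qed.

Theorem corollary1 (C : numClosedFieldType) (K M N d : nat) (c : C)
    (eps : C -> C) :
  (0 < d)%N -> (N <= K.-1 * M)%N -> (N < K.-1 * M)%N -> 0 < c ->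
  (forall q, eps q \is Num.real) ->
  little_o_root eps (NG K M N) ->
  exists B : C, exists P0 : C, 0 < P0 /\
  forall P : C, P0 <= P ->
  (* Q = 2^{N_f} with N_f = N((K-1)M-N) log2 P, i.e. Q = P^{N_G/2} *)
  let Q := sqrtC P ^+ NG K M N in
  forall S : seq 'M[C]_(\sum_(j < K.-1) M, N),
    (size S)%:R = Q ->
    (forall X, X \in S -> trunc_unitary X) ->
    (forall F : 'M[C]_(\sum_(j < K.-1) M, N), trunc_unitary F ->
       exists2 X, X \in S & dchord X F <= Delta K M N c Q * (1 + eps Q)) ->
  forall (H : 'I_K -> 'I_K -> 'M[C]_(N, M)) (V : 'I_K -> 'M[C]_(M, d))
         (i : 'I_K)
         (F : 'M[C]_(\sum_(j < K.-1) M, N)) (Ci : 'M[C]_N)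
         (Fh : 'M[C]_(\sum_(j < K.-1) M, N)) (U : 'M[C]_(N, d)),
    (forall j, trunc_unitary (V j)) ->
    trunc_unitary F -> Ci \in unitmx -> mxH (Hcat H i) = F *m Ci ->
    Fh \in S -> (forall X, X \in S -> dchord Fh F <= dchord X F) ->
    trunc_unitary U -> mxH U *m mxH Fh *m Vminus V i = 0 ->
    leakage P H V (Gfilt Ci F Fh U) i <= B.
Proof.
move=> hd hNle hNlt hc hreal ho.
case: (posnP N) => [N0|Npos].
  exists 0, 1; split=> // P _ Q S _ _ _ H V i F Ci Fh U _ _ _ _ _ _ _ _.
  subst N; rewrite /leakage big1 // => j _.
  by rewrite (thinmx0 (mxH _)) !mul0mx mxtrace0 mulr0.
have n0 : (0 < NG K M N)%N by rewrite /NG !muln_gt0 Npos subn_gt0 hNlt.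
set n := NG K M N in n0 ho *.
have [X [X0 hX]] := ho 1 ltr01.
set bnd := 32 / (d%:R * (n.-root c) ^+ 2).
have bnd0 : 0 <= bnd.
  by rewrite divr_ge0 ?ler0n // mulr_ge0 ?ler0n // exprn_ge0 // rootC_ge0 // ltW.
exists (K%:R * bnd), (X ^+ 2 + 1); split.
  by rewrite ltr_wpDl ?exprn_ge0 ?ltW.
move=> P hP Q S hsz hSu hcov H V i F Ci Fh U hV hF hC hH hFhS hmin hU hO.
have hFh := hSu _ hFhS.
have X2 : 0 <= X ^+ 2 by rewrite exprn_ge0 // ltW.
have P1 : 1 <= P by apply: le_trans hP; rewrite ler_wpDl.
have P0 : 0 < P by apply: lt_le_trans P1.
have s1 : 1 <= sqrtC P by rewrite -sqrtC1 ler_sqrtC // nnegrE ?ler01 // ltW.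
have sX : X <= sqrtC P.
  rewrite -(ler_pXn2r (n := 2)) // ?nnegrE ?ltW // ?sqrtCK.
    by apply: lt_le_trans hP; rewrite ltrDl ltr01.
  by rewrite sqrtC_gt0.
have QX : X <= Q by apply: le_trans sX _; rewrite /Q ler_eXnr.
have Q1 : 1 <= Q by rewrite /Q exprn_ege1.
have heps : eps Q <= 1.
  apply: le_trans (real_ler_norm (hreal _)) _.
  apply: le_trans (hX _ QX) _.
  rewrite div1r invf_le1 ?rootC_ge1 // rootC_gt0 //.
  by apply: lt_le_trans Q1.
have [Xc XcS hXc] := hcov F hF.
have hdc : dchord Fh F <= Delta K M N c Q * (1 + eps Q).
  by apply: le_trans (hmin _ XcS) hXc.
have key := scal n0 hd hc P0 (dchord_ge0 Fh F) hdc heps.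
rewrite dchord_ns -/bnd in key.
rewrite /leakage.
apply: (@le_trans _ _ (\sum_(j < K | j != i) bnd)).
  apply: ler_sum => j hj.
  have hij : i != j by rewrite eq_sym.
  have [j' ej' _] := unlift_some hij.
  subst j.
  apply: le_trans key; apply: ler_wpM2l; first by rewrite divr_ge0 ?ler0n // ltW.
  by apply: (keyA (hV _)).
have -> : K%:R * bnd = \sum_(j < K) bnd by rewrite sumr_const card_ord mulr_natl.
rewrite big_mkcond /=.
by apply: ler_sum => j _; case: ifP.
Qed.
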